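(* Let $S$ be a finite $p$-group and $\mathcal{A}$ a bifree $S$-algebra with $(S,S)$-invariant $\mathcal{O}$-basis $Y$. Let $P\le S$ and let $\varphi:P\to S$ be an injective group homomorphism such that $\mathcal{A}^\times\cap{}^\varphi\mathcal{A}^P\neq\emptyset$. Then ${}^\varphi_PY_S\cong{}_PY_S$ as $(P,S)$-bisets.
   Context: $\mathcal{O}$ is a complete local noetherian domain with algebraically closed residue field of characteristic $p$. An interior $S$-algebra is an $\mathcal{O}$-free finite-rank $\mathcal{O}$-algebra $\mathcal{A}$ with a group homomorphism $S\to\mathcal{A}^\times$. It is bifree if it has an $\mathcal{O}$-basis $Y$ with $sY=Y=Ys$ for all $s\in S$ (an $(S,S)$-invariant basis, hence an $(S,S)$-biset) on which the left and right $S$-actions are free. ${}^\varphi\mathcal{A}^P=\{a\in\mathcal{A}:\varphi(p)a=ap\ \forall p\in P\}$. ${}_PY_S$ is $Y$ with left action restricted to $P$; ${}^\varphi_PY_S$ is $Y$ with $(P,S)$-action $p\odot y\odot s=\varphi(p)ys$. *)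

(* Defs.v *)
From HB Require Import structures.
From mathcomp Require Import all_boot all_order all_algebra all_fingroup all_solvable.
Set Implicit Arguments. Unset Strict Implicit. Unset Printing Implicit Defensive.
Import GRing.Theory.
Local Open Scope ring_scope.

Section Ring.
Variable R : comUnitRingType.

Definition is_ideal (I : R -> Prop) :=
  [/\ I 0, (forall x y, I x -> I y -> I (x - y)) & (forall r x, I x -> I (r * x))].

(* local ring: the non-units form an ideal (which is then the unique maximal ideal) *)
Definition max_ideal : R -> Prop := fun x => x \isn't a GRing.unit.
Definition is_local := is_ideal max_ideal.

Definition is_noetherian :=
  forall I, is_ideal I -> exists s : seq R,
    forall x, I x <-> exists c : 'I_(size s) -> R, x = \sum_(i < size s) c i * s`_i.

Definition ideal_mul (I J : R -> Prop) : R -> Prop := fun x =>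
  exists k (a b : 'I_k -> R),
    [/\ forall i, I (a i), forall i, J (b i) & x = \sum_(i < k) a i * b i].
Fixpoint ideal_pow (I : R -> Prop) (n : nat) : R -> Prop :=
  if n is n'.+1 then ideal_mul I (ideal_pow I n') else (fun _ => True).

Definition is_complete :=
  forall u : nat -> R,
    (forall n, exists N, forall i j, (N <= i)%N -> (N <= j)%N ->
        ideal_pow max_ideal n (u i - u j)) ->
    exists l, forall n, exists N, forall i, (N <= i)%N -> ideal_pow max_ideal n (u i - l).

(* residue field O/m is algebraically closed: every monic polynomial of positive
   degree over O has a root modulo m (every such polynomial over O/m lifts) *)
Definition residue_alg_closed :=
  forall q : {poly R}, q \is monic -> (1 < size q)%N -> exists x, max_ideal q.[x].

Definition residue_char (p : nat) := max_ideal p%:R.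

End Ring.

Definition standing_O (p : nat) (O : idomainType) :=
  [/\ prime p, is_local O, is_noetherian O,
      is_complete O /\ residue_alg_closed O & residue_char O p].

Section Alg.
Variables (O : idomainType) (A : algType O) (gT : finGroupType).

Definition is_unitA (a : A) := exists b : A, a * b = 1 /\ b * a = 1.

Definition interior (S : {set gT}) (sigma : gT -> A) :=
  sigma 1%g = 1 /\ {in S &, forall x y, sigma (x * y)%g = sigma x * sigma y}.

Definition is_Obasis (Y : seq A) :=
  [/\ uniq Y,
      (forall a : A, exists c : 'I_(size Y) -> O, a = \sum_(i < size Y) c i *: Y`_i)
    & (forall c : 'I_(size Y) -> O,
         \sum_(i < size Y) c i *: Y`_i = 0 -> forall i, c i = 0)].

Definition bifree_basis (S : {set gT}) (sigma : gT -> A) (Y : seq A) :=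
  [/\ is_Obasis Y,
      {in S, forall s, {in Y, forall y, sigma s * y \in Y /\ y * sigma s \in Y}},
      {in S, forall s, {in Y, forall y, sigma s * y = y -> s = 1%g}}
    & {in S, forall s, {in Y, forall y, y * sigma s = y -> s = 1%g}}].

Definition twisted_fixed (P : {set gT}) (sigma : gT -> A) (phi : gT -> gT) (a : A) :=
  {in P, forall q, sigma (phi q) * a = a * sigma q}.

Definition twisted_biset_iso (P S : {set gT}) (sigma : gT -> A) (phi : gT -> gT)
    (Y : seq A) :=
  exists f : A -> A,
    [/\ {in Y, forall y, f y \in Y},
        {in Y &, injective f},
        {in Y, forall z, exists2 y, y \in Y & f y = z}
      & {in P, forall q, {in S, forall s, {in Y, forall y,
           f (sigma (phi q) * y * sigma s) = sigma q * f y * sigma s}}}].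

End Alg.

(* Main.v *)
Require Import Defs.
From HB Require Import structures.
From mathcomp Require Import all_boot all_order all_algebra all_fingroup all_solvable.
Set Implicit Arguments. Unset Strict Implicit. Unset Printing Implicit Defensive.

Section Marks.
Variables (aT : finGroupType) (D : {group aT}) (T : finType) (G : {group aT}).
Hypothesis sGD : G \subset D.

Lemma inC1 (to : action D T) x a : a \in D -> (a \in 'C[x | to]%g) = (to x a == x).
Proof. by move=> Da; rewrite !inE Da sub1set inE. Qed.

Lemma stab_eq_act (to1 to2 : action D T) x1 x2 :
  'C_G[x1 | to1]%g = 'C_G[x2 | to2]%g -> forall a b, a \in G -> b \in G ->
  to2 x2 a = to2 x2 b -> to1 x1 a = to1 x1 b.
Proof.
move=> E a b Ga Gb eab.
have Da := subsetP sGD _ Ga; have Db := subsetP sGD _ Gb.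
have Dbi : (b^-1)%g \in D by rewrite groupV.
have Gab : (a * b^-1)%g \in G by rewrite groupM ?groupV.
have : (a * b^-1)%g \in 'C_G[x2 | to2]%g.
  by rewrite inE Gab /= inC1 ?groupM // actMin // eab actKin.
rewrite -E inE Gab /= inC1 ?groupM // actMin // => /eqP e.
by apply: (act_inj to1 (b^-1)%g); rewrite e actKin.
Qed.

Lemma orbit_map (to1 to2 : action D T) x1 x2 :
  'C_G[x1 | to1]%g = 'C_G[x2 | to2]%g ->
  exists g : T -> T, [/\ {in orbit to2 G x2, forall x, g x \in orbit to1 G x1},
   {in orbit to2 G x2 &, injective g} &
   {in orbit to2 G x2, forall x, {in G, forall a, g (to2 x a) = to1 (g x) a}}].
Proof.
move=> E.
pose g x := to1 x1 (odflt 1%g [pick a in G | to2 x2 a == x]).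
have gE a : a \in G -> g (to2 x2 a) = to1 x1 a.
  move=> Ga; rewrite /g; case: pickP => [b /andP[Gb /eqP eb]|/(_ a)] /=.
    exact: (stab_eq_act E).
  by rewrite Ga eqxx.
exists g; split.
- by move=> _ /orbitP[a Ga <-]; rewrite gE // mem_orbit.
- move=> _ _ /orbitP[a Ga <-] /orbitP[b Gb <-]; rewrite !gE // => e.
  by apply: (stab_eq_act (esym E)).
- move=> _ /orbitP[a Ga <-] b Gb.
  have Da := subsetP sGD _ Ga; have Db := subsetP sGD _ Gb.
  by rewrite -actMin // gE ?groupM // gE // actMin.
Qed.


Lemma fix_le (to1 to2 : action D T) (B1 B2 : {set T}) g (H : {group aT}) :
  H \subset G -> {in B2, forall x, g x \in B1} -> {in B2 &, injective g} ->
  {in B2, forall x, {in G, forall a, g (to2 x a) = to1 (g x) a}} ->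
  #|B2 :&: 'Fix_to2(H)%g| <= #|B1 :&: 'Fix_to1(H)%g|.
Proof.
move=> sHG gB ginj geq.
rewrite -(card_in_imset (f:=g) (D:= B2 :&: 'Fix_to2(H)%g)); last first.
  by move=> x y /setIP[? _] /setIP[? _]; apply: ginj.
apply: subset_leq_card; apply/subsetP => _ /imsetP[x /setIP[Bx /afixP fx] ->].
rewrite inE gB //=; apply/afixP => h Hh.
by rewrite -geq ?fx // (subsetP sHG).
Qed.

Lemma match_stab (to1 to2 : action D T) (B1 B2 : {set T}) x1 :
  (forall H : {group aT}, H \subset G ->
     #|B1 :&: 'Fix_to1(H)%g| = #|B2 :&: 'Fix_to2(H)%g|) ->
  x1 \in B1 ->
  (forall y, y \in B2 -> #|'C_G[y | to2]%g| <= #|'C_G[x1 | to1]%g|) ->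
  exists2 x2, x2 \in B2 & 'C_G[x1 | to1]%g = 'C_G[x2 | to2]%g.
Proof.
move=> Efix B1x1 maxx.
have sHG : 'C_G[x1 | to1]%G \subset G by apply: subsetIl.
have : 0 < #|B1 :&: 'Fix_to1('C_G[x1 | to1]%G)%g|.
  apply/card_gt0P; exists x1.
  rewrite inE B1x1 /=; apply/afixP => h /setIP[_ Ch].
  exact: astab_act Ch (set11 x1).
rewrite Efix // => /card_gt0P[x2 /setIP[B2x2 /afixP fx2]].
exists x2 => //; apply/eqP; rewrite eqEcard maxx // andbT.
apply/subsetP => h Hh; have Gh := subsetP sHG _ Hh.
by rewrite inE Gh /= inC1 ?fx2 // (subsetP sGD).
Qed.

Lemma marks (to1 to2 : action D T) k : forall B1 B2 : {set T}, #|B1| <= k ->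
  [acts G, on B1 | to1] -> [acts G, on B2 | to2] ->
  (forall H : {group aT}, H \subset G ->
     #|B1 :&: 'Fix_to1(H)%g| = #|B2 :&: 'Fix_to2(H)%g|) ->
  exists f : T -> T, [/\ {in B2, forall x, f x \in B1}, {in B2 &, injective f} &
     {in B2, forall x, {in G, forall a, f (to2 x a) = to1 (f x) a}}].
Proof.
elim: k => [|k IH] B1 B2 cB1 a1 a2 Efix.
all: have cE : #|B1| = #|B2| by
  have := Efix 1%G (sub1G G); rewrite !afix1 !setIT.
all: case: (set_0Vmem B2) => [->|[y2 B2y2]]; first by exists id; split => // x; rewrite inE.
  by move: cB1; rewrite cE leqn0 => /eqP/cards0_eq E2; rewrite E2 inE in B2y2.
have [y1 B1y1] : exists y1, y1 \in B1.
  by apply/card_gt0P; rewrite cE; apply/card_gt0P; exists y2.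
case: (arg_maxnP (fun x => #|'C_G[x | to1]%g|) B1y1) => z1 B1z1 max1.
case: (arg_maxnP (fun x => #|'C_G[x | to2]%g|) B2y2) => z2 B2z2 max2.
have [x1 [x2 [B1x1 B2x2 Ex]]] : exists x1 x2, [/\ x1 \in B1, x2 \in B2 &
    'C_G[x1 | to1]%g = 'C_G[x2 | to2]%g].
  case: (leqP #|'C_G[z2 | to2]%g| #|'C_G[z1 | to1]%g|) => cmp.
    have [x2 B2x2 E] := match_stab Efix B1z1 (fun y Hy => leq_trans (max2 y Hy) cmp).
    by exists z1, x2.
  have Efix' : forall H : {group aT}, H \subset G ->
     #|B2 :&: 'Fix_to2(H)%g| = #|B1 :&: 'Fix_to1(H)%g| by move=> H sH; rewrite Efix.
  have [x1 B1x1 E] := match_stab Efix' B2z2 (fun y Hy => leq_trans (max1 y Hy) (ltnW cmp)).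
  by exists x1, z2.
have [g [gO ginj geq]] := orbit_map Ex.
have [g' [gO' ginj' geq']] := orbit_map (esym Ex).
set O1 := orbit to1 G x1; set O2 := orbit to2 G x2.
have sO1 : O1 \subset B1 by apply/subsetP => y /orbitP[a Ga <-]; rewrite (acts_act a1).
have sO2 : O2 \subset B2 by apply/subsetP => y /orbitP[a Ga <-]; rewrite (acts_act a2).
have c1 : #|B1 :\: O1| <= k.
  rewrite cardsD (setIidPr sO1) -ltnS; apply: leq_trans cB1.
  by rewrite ltn_subrL; apply/andP; split; apply/card_gt0P; [exists x1|exists y1]; rewrite ?orbit_refl.
have ac1 : [acts G, on B1 :\: O1 | to1] by apply: actsD => //; apply: acts_orbit.
have ac2 : [acts G, on B2 :\: O2 | to2] by apply: actsD => //; apply: acts_orbit.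
have ef : forall H : {group aT}, H \subset G ->
     #|(B1 :\: O1) :&: 'Fix_to1(H)%g| = #|(B2 :\: O2) :&: 'Fix_to2(H)%g|.
  move=> H sHG; rewrite !setIDAC !cardsD.
  rewrite (setIAC B1) (setIAC B2) (setIidPr sO1) (setIidPr sO2) Efix //.
  congr (_ - _); apply/eqP; rewrite eqn_leq.
  by rewrite (fix_le sHG gO ginj geq) (fix_le sHG gO' ginj' geq').
have [f' [f'B f'inj f'eq]] := IH _ _ c1 ac1 ac2 ef.
exists (fun x => if x \in O2 then g x else f' x); split.
- move=> x B2x; case: ifP => Ox; first exact: (subsetP sO1 _ (gO x Ox)).
  by have := f'B x; rewrite !inE Ox B2x => /(_ isT) /andP[].
- move=> x y B2x B2y /=; case: ifP => Ox; case: ifP => Oy.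
  + exact: ginj.
  + move=> e; have := f'B y; rewrite !inE Oy B2y -e => /(_ isT).
    by rewrite gO.
  + move=> e; have := f'B x; rewrite !inE Ox B2x e => /(_ isT).
    by rewrite gO.
  + by apply: f'inj; rewrite inE ?Ox ?Oy ?B2x ?B2y.
- move=> x B2x a Ga /=.
  have Oxa : (to2 x a \in O2) = (x \in O2) by rewrite orbit_actr_in.
  rewrite Oxa; case: ifP => Ox; first exact: geq.
  by apply: f'eq => //; rewrite inE Ox.
Qed.

End Marks.

Import GRing.Theory.
Local Open Scope ring_scope.

Section Ideal.
Variable R : comUnitRingType.
Hypothesis loc : is_local R.
Local Notation I := (max_ideal (R:=R)).

Lemma mI0 : I 0. Proof. by case: loc. Qed.
Lemma mIB x y : I x -> I y -> I (x - y). Proof. by case: loc => _ H _; apply: H. Qed.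
Lemma mIM r x : I x -> I (r * x). Proof. by case: loc => _ _ H; apply: H. Qed.
Lemma mIMr r x : I x -> I (x * r). Proof. by rewrite mulrC; apply: mIM. Qed.
Lemma mIN x : I x -> I (- x). Proof. by move=> Ix; rewrite -sub0r; apply: mIB => //; apply: mI0. Qed.
Lemma mID x y : I x -> I y -> I (x + y).
Proof. by move=> Ix Iy; rewrite -[y]opprK; apply: mIB => //; apply: mIN. Qed.
Lemma mI_sum (J : Type) (r : seq J) (P : pred J) (F : J -> R) :
  (forall j, P j -> I (F j)) -> I (\sum_(j <- r | P j) F j).
Proof. by move=> H; apply: (big_ind I mI0 mID). Qed.
Lemma mI1 : ~ I 1. Proof. by rewrite /max_ideal unitr1. Qed.
Lemma mI_unit x : I (x - 1) -> x \is a GRing.unit.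
Proof.
move=> H; apply/negPn/negP => Hx; apply: mI1.
by have := mIB Hx H; rewrite opprB addrC subrK.
Qed.

Lemma det_near_id n (B : 'M[R]_n) :
  (forall i k, I (B i k - (i == k)%:R)) -> I (\det B - 1).
Proof.
move=> HB; rewrite /determinant (bigD1 1%g) //= odd_perm1 expr0 mul1r.
rewrite addrAC; apply: mID.
  apply: (big_ind (fun x => I (x - 1))); first by rewrite subrr; apply: mI0.
    move=> x y Ix Iy; have -> : x * y - 1 = x * (y - 1) + (x - 1).
      by rewrite mulrBr mulr1 addrA subrK.
    by apply: mID => //; apply: mIM.
  by move=> i _; rewrite perm1; have := HB i i; rewrite eqxx.
apply: mI_sum => s s1.
have [i si] : exists i, s i != i.
  apply/existsP; apply: contraR s1 => /existsPn H; apply/eqP/permP => i.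
  by rewrite perm1; apply/eqP; have := H i; rewrite negbK.
rewrite (bigD1 i) //= mulrCA; apply: mIMr.
by have := HB i (s i); rewrite eq_sym (negbTE si) subr0.
Qed.

Lemma orbit_sum_fix (p : nat) (aT : finGroupType) (D : {group aT}) (T : finType)
   (to : action D T) (H : {group aT}) (c : T -> R) :
  prime p -> I p%:R -> H \subset D -> (p.-group H)%g ->
  (forall x h, h \in H -> c (to x h) = c x) ->
  I (\sum_(x in ~: 'Fix_to(H)%g) c x).
Proof.
move=> pr_p Ip sHD pH cH.
have actC : [acts H, on ~: 'Fix_to(H)%g | to].
  apply/subsetP => h Hh; rewrite inE (subsetP sHD) //= inE; apply/subsetP => x.
  rewrite inE => nx; rewrite inE inE; apply: contra nx => /afixP fx; apply/afixP => k Hk.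
  have Dh := subsetP sHD _ Hh.
  have e : x = to x h by have := fx _ (groupVr Hh); rewrite actKin.
  by rewrite e fx.
have /and3P[/eqP cov triv _] := orbit_partition actC.
rewrite -cov big_trivIset //; apply: mI_sum => _ /imsetP[y Cy ->].
have ey : forall x, x \in orbit to H y -> c x = c y by move=> _ /orbitP[h Hh <-]; apply: cH.
rewrite (eq_bigr (fun _ => c y)); last by move=> x /ey.
rewrite sumr_const.
have : (p %| #|orbit to H y|)%N.
  rewrite card_orbit_in //.
  have pn : p.-nat (#|H : 'C_H[y | to]|)%g by apply: pnat_dvd (dvdn_indexg _ _) pH.
  have [k ek] := p_natP pn.
  case: k ek => [|k] ek.
    have := card_orbit1 (G:=H) (to:=to) (x:=y).
    rewrite card_orbit_in // ek expn0 => /(_ erefl) /orbit1P.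
    by move: Cy; rewrite inE => /negbTE ->.
  by rewrite ek expnS dvdn_mulr.
case/dvdnP => k ->; rewrite mulrnA -mulr_natr; exact: mIM.
Qed.

Lemma rank_le (T : finType) (F1 F2 : {set T}) (N M : T -> T -> R) :
  (forall i k, i \in F1 -> k \in F1 ->
     I (\sum_(j in F2) N i j * M j k - (i == k)%:R)) -> (#|F1| <= #|F2|)%N.
Proof.
move=> HNM; rewrite leqNgt; apply/negP => lt.
set n1 := #|F1| in lt; set n2 := #|F2| in lt.
have [x0 _] : exists x0, x0 \in F1.
  by apply/card_gt0P; apply: leq_ltn_trans lt.
pose e1 (i : 'I_n1) := nth x0 (enum F1) i.
pose e2 (j : nat) := nth x0 (enum F2) j.
have e1F (i : 'I_n1) : e1 i \in F1.
  by rewrite -mem_enum mem_nth // -cardE.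
have e1E (i k : 'I_n1) : (e1 i == e1 k) = (i == k).
  by rewrite nth_uniq ?enum_uniq // -cardE.
pose X := \matrix_(i < n1, j < n1) (if (j < n2)%N then N (e1 i) (e2 j) else 0).
pose Y := \matrix_(j < n1, k < n1) (if (j < n2)%N then M (e2 j) (e1 k) else 0).
have dY : \det Y = 0.
  rewrite (expand_det_row Y (Ordinal lt)) big1 // => j _.
  by rewrite !mxE ltnn mul0r.
have dXY : I (\det (X *m Y) - 1).
  apply: det_near_id => i k; rewrite mxE -e1E.
  have -> : \sum_j X i j * Y j k = \sum_(j in F2) N (e1 i) j * M j (e1 k).
    rewrite (eq_bigr (fun j : 'I_n1 => if (j < n2)%N then N (e1 i) (e2 j) * M (e2 j) (e1 k) else 0)); last first.
      by move=> j _; rewrite !mxE; case: ifP => _ //; rewrite mul0r.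
    rewrite -big_mkcond /=.
    rewrite -[RHS]big_enum (big_nth x0) /= -cardE big_mkord.
    rewrite (big_ord_widen_cond n1 xpredT (fun j => N (e1 i) (e2 j) * M (e2 j) (e1 k)) (ltnW lt)).
    by apply: eq_bigl => j.
  exact: HNM.
have := mI_unit dXY; rewrite det_mulmx dY mulr0 unitr0 //.
Qed.

Lemma fix_le_coef (p : nat) (aT : finGroupType) (D : {group aT}) (T : finType)
   (to to' : action D T) (H : {group aT}) (U V : T -> T -> R) :
  prime p -> I p%:R -> H \subset D -> (p.-group H)%g ->
  (forall i k, \sum_j U i j * V j k = (i == k)%:R) ->
  (forall g, g \in H -> forall i j, U (to i g) (to' j g) = U i j) ->
  (forall g, g \in H -> forall j k, V (to' j g) (to k g) = V j k) ->
  (#|'Fix_to(H)%g| <= #|'Fix_to'(H)%g|)%N.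
Proof.
move=> pr_p Ip sHD pH HUV HU HV.
apply: (rank_le (N:=U) (M:=V)) => i k Fi Fk.
have E := HUV i k; rewrite (bigID (mem 'Fix_to'(H)%g)) /= in E; rewrite -E opprD addrA.
rewrite [X in X - _](_ : _ = 0) ?sub0r; last first.
  by rewrite subrr.
apply: mIN; rewrite (eq_bigl (fun j => j \in ~: 'Fix_to'(H)%g)); last by move=> j; rewrite in_setC.
apply: (orbit_sum_fix (p:=p)) => // j h Hh.
move/afixP: Fi => Fi; move/afixP: Fk => Fk.
by rewrite -{1}(Fi h Hh) HU // -{1}(Fk h Hh) HV.
Qed.

End Ideal.

Section Alg.
Variables (O : idomainType) (A : algType O) (gT : finGroupType).
Variables (S P : {group gT}) (sigma : gT -> A) (Y : seq A).
Hypothesis intS : interior S sigma.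
Hypothesis bfY : bifree_basis S sigma Y.
Hypothesis sPS : P \subset S.

Local Notation n := (size Y).
Local Notation yy i := (Y`_i).

Lemma s1 : sigma 1%g = 1. Proof. by case: intS. Qed.
Lemma sM : {in S &, forall x y, sigma (x * y)%g = sigma x * sigma y}.
Proof. by case: intS. Qed.
Lemma sVl u : u \in S -> sigma (u^-1)%g * sigma u = 1.
Proof. by move=> Su; rewrite -sM ?groupV // mulVg s1. Qed.
Lemma sVr u : u \in S -> sigma u * sigma (u^-1)%g = 1.
Proof. by move=> Su; rewrite -sM ?groupV // mulgV s1. Qed.

Lemma Yuniq : uniq Y. Proof. by case: bfY => [[]]. Qed.
Lemma yy_inj (i j : 'I_n) : yy i = yy j -> i = j.
Proof. by move=> e; apply/val_inj/eqP; rewrite -(nth_uniq 0 (ltn_ord i) (ltn_ord j) Yuniq) e. Qed.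
Lemma yyY (i : 'I_n) : yy i \in Y. Proof. exact: mem_nth. Qed.

Lemma LY u v y : u \in S -> v \in S -> y \in Y -> sigma u * y * sigma v \in Y.
Proof.
case: bfY => _ Hinv _ _ Su Sv Yy.
have [h1 _] := Hinv u Su y Yy.
by have [_ h2] := Hinv v Sv _ h1.
Qed.

Lemma Lcancel u v x : u \in S -> v \in S ->
  sigma (u^-1)%g * (sigma u * x * sigma v) * sigma (v^-1)%g = x.
Proof. by move=> Su Sv; rewrite !mulrA sVl // mul1r -mulrA sVr // mulr1. Qed.

Definition tr (u v : gT) (i : 'I_n) : 'I_n := insubd i (index (sigma u * yy i * sigma v) Y).

Lemma trE u v i : u \in S -> v \in S -> yy (tr u v i) = sigma u * yy i * sigma v.
Proof.
move=> Su Sv; have Yz := LY Su Sv (yyY i).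
by rewrite /tr val_insubd index_mem Yz nth_index.
Qed.

Definition actf (rho : gT -> gT) (i : 'I_n) (g : gT * gT) : 'I_n :=
  if g \in setX P S then tr ((rho g.1)^-1)%g g.2 i else i.

Lemma actfE rho i g : {in P, forall q, rho q \in S} -> g \in setX P S ->
  yy (actf rho i g) = sigma ((rho g.1)^-1)%g * yy i * sigma g.2.
Proof.
move=> rS Gg; rewrite /actf Gg; move: Gg; rewrite inE => /andP[P1 S2].
by rewrite trE ?groupV ?rS.
Qed.

Lemma actf_is_action rho : {in P, forall q, rho q \in S} ->
  {in P &, forall x y, rho (x * y)%g = (rho x * rho y)%g} ->
  is_action (setX P S) (actf rho).
Proof.
move=> rS rM; split.
  move=> g i j; rewrite /actf; case: ifP => // Gg.
  move: Gg; rewrite inE => /andP[P1 S2] e.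
  apply: yy_inj; have := congr1 (fun k : 'I_n => yy k) e; rewrite !trE ?groupV ?rS // => e'.
  rewrite -(Lcancel (yy i) (groupVr (rS _ P1)) S2) -(Lcancel (yy j) (groupVr (rS _ P1)) S2).
  by rewrite e'.
move=> i g h Gg Gh; apply: yy_inj.
have Ggh : (g * h)%g \in setX P S by rewrite groupM.
move: (Gg) (Gh); rewrite !inE => /andP[Pg1 Sg2] /andP[Ph1 Sh2].
rewrite !actfE //= rM // invMg !sM ?groupV ?rS //.
by rewrite !mulrA.
Qed.

Definition act_of rho rS rM : action (setX P S) 'I_n :=
  Action (@actf_is_action rho rS rM).

Lemma coef_uniq (c d : 'I_n -> O) :
  \sum_(i < n) c i *: yy i = \sum_(i < n) d i *: yy i -> forall i, c i = d i.
Proof.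
case: bfY => [[_ _ Hind]] _ _ _ e i; apply/eqP; rewrite -subr_eq0; apply/eqP.
move: i; apply: (Hind (fun i => c i - d i)).
by rewrite (eq_bigr (fun i => c i *: yy i - d i *: yy i)) ?sumrB ?e ?subrr // => i _; rewrite scalerBl.
Qed.

Lemma coef_equiv (rho1 rho2 : gT -> gT)
  (r1S : {in P, forall q, rho1 q \in S})
  (r1M : {in P &, forall x y, rho1 (x * y)%g = (rho1 x * rho1 y)%g})
  (r2S : {in P, forall q, rho2 q \in S})
  (r2M : {in P &, forall x y, rho2 (x * y)%g = (rho2 x * rho2 y)%g})
  (c : A) (C : 'I_n -> 'I_n -> O) :
  (forall j : 'I_n, c * yy j = \sum_(i < n) C i j *: yy i) ->
  {in P, forall q, c * sigma ((rho1 q)^-1)%g = sigma ((rho2 q)^-1)%g * c} ->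
  forall g, g \in setX P S -> forall i j,
  C (act_of r2S r2M i g) (act_of r1S r1M j g) = C i j.
Proof.
set to1 := act_of r1S r1M; set to2 := act_of r2S r2M.
move=> HC Hc g Gg.
have [P1 S2] : g.1 \in P /\ g.2 \in S by move: Gg; rewrite inE => /andP[].
have E1 j : yy (to1 j g) = sigma ((rho1 g.1)^-1)%g * yy j * sigma g.2 by apply: actfE.
have E2 i : yy (to2 i g) = sigma ((rho2 g.1)^-1)%g * yy i * sigma g.2 by apply: actfE.
have key : forall i j, C i (to1 j g) = C (to2 i (g^-1)%g) j.
  move=> i j; move: i; apply: coef_uniq; rewrite -HC E1 !mulrA Hc //.
  rewrite -[_ * c * yy j]mulrA HC mulr_sumr mulr_suml.
  rewrite [RHS](reindex_inj (act_inj to2 g)).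
  apply: eq_bigr => i _; rewrite actKin // E2; by rewrite -scalerAr -scalerAl.
move=> i j; rewrite key actKin //.
Qed.

Lemma prod_id (c c' : A) (C C' : 'I_n -> 'I_n -> O) :
  c' * c = 1 ->
  (forall j : 'I_n, c * yy j = \sum_(i < n) C i j *: yy i) ->
  (forall j : 'I_n, c' * yy j = \sum_(i < n) C' i j *: yy i) ->
  forall i k : 'I_n, \sum_(j < n) C' i j * C j k = (i == k)%:R.
Proof.
move=> cc HC HC' i k; move: i; apply: coef_uniq.
have E : \sum_(i < n) (i == k)%:R *: yy i = yy k.
  rewrite (bigD1 k) //= eqxx scale1r big1 ?addr0 // => i /negbTE ->.
  by rewrite scale0r.
rewrite E.
symmetry; rewrite -{1}[yy k]mul1r -cc -mulrA HC mulr_sumr.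
rewrite (eq_bigr (fun j => \sum_(i < n) (C j k * C' i j) *: yy i)); last first.
  move=> j _; rewrite -scalerAr HC' scaler_sumr; apply: eq_bigr => i _.
  by rewrite scalerA.
rewrite exchange_big /=; apply: eq_bigr => i _; rewrite scaler_suml.
by apply: eq_bigr => j _; rewrite mulrC.
Qed.

End Alg.

Unset Implicit Arguments.

Theorem lemma4p1 (p : nat) (O : idomainType) (A : algType O) (gT : finGroupType)
    (S P : {group gT}) (sigma : gT -> A) (Y : seq A) (phi : {morphism P >-> gT}) :
  standing_O p O ->
  (p.-group S)%g ->
  interior S sigma ->
  bifree_basis S sigma Y ->
  P \subset S ->
  ('injm phi)%g ->
  (phi @* P \subset S)%g ->
  (exists a : A, is_unitA a /\ twisted_fixed P sigma phi a) ->
  twisted_biset_iso P S sigma phi Y.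
Proof.
move=> [pr_p loc _ _ Ip] pS intS bfY sPS _ sphi [a [[b [ab ba]] tfa]].
have Yspan : forall z : A, exists c : 'I_(size Y) -> O, z = \sum_(i < size Y) c i *: Y`_i.
  by case: bfY => [[]].
have idS : {in P, forall q, id q \in S} by move=> q Pq; apply: (subsetP sPS).
have idM : {in P &, forall x y, id (x * y)%g = (id x * id y)%g} by [].
have phS : {in P, forall q, phi q \in S}.
  by move=> q Pq; apply: (subsetP sphi); apply: mem_morphim.
have phM : {in P &, forall x y, phi (x * y)%g = (phi x * phi y)%g}.
  by move=> x y Px Py; apply: morphM.
set to1 := act_of intS bfY idS idM.
set to2 := act_of intS bfY phS phM.
have [Ma HMa] := fin_all_exists (fun j : 'I_(size Y) => Yspan (a * Y`_j)).
have [Nb HNb] := fin_all_exists (fun j : 'I_(size Y) => Yspan (b * Y`_j)).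
pose MC i j := Ma j i; pose NC i j := Nb j i.
have HMC : forall j : 'I_(size Y), a * Y`_j = \sum_(i < size Y) MC i j *: Y`_i by [].
have HNC : forall j : 'I_(size Y), b * Y`_j = \sum_(i < size Y) NC i j *: Y`_i by [].
have comA : {in P, forall q, a * sigma ((id q)^-1)%g = sigma ((phi q)^-1)%g * a}.
  move=> x Px; rewrite -morphV //; symmetry; by apply: tfa; rewrite groupV.
have comB : {in P, forall q, b * sigma ((phi q)^-1)%g = sigma ((id q)^-1)%g * b}.
  move=> x Px; have := tfa _ (groupVr Px); rewrite morphV // => e.
  by rewrite -[LHS]mulr1 -ab mulrA -[b * _ * a]mulrA e mulrA ba mul1r.
have EMa := coef_equiv intS bfY idS idM phS phM HMC comA.
have ENb := coef_equiv intS bfY phS phM idS idM HNC comB.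
have PNM := prod_id bfY ba HMC HNC.
have PMN := prod_id bfY ab HNC HMC.
set G := setX P S.
have pG : (p.-group G)%g.
  rewrite /pgroup cardsX pnatM; apply/andP; split; last exact: pS.
  exact: pgroupS sPS pS.
have actsT (to : action G 'I_(size Y)) : [acts G, on [set: 'I_(size Y)] | to].
  by apply/subsetP => g Gg; rewrite inE Gg /= inE; apply/subsetP => x; rewrite !inE.
have Efix : forall H : {group (gT * gT)}, H \subset G ->
    #|[set: 'I_(size Y)] :&: 'Fix_to1(H)%g| = #|[set: 'I_(size Y)] :&: 'Fix_to2(H)%g|.
  move=> H sHG; rewrite !setTI; apply/eqP; rewrite eqn_leq.
  have pH := pgroupS sHG pG.
  rewrite (fix_le_coef loc (to:=to1) (to':=to2) (U:=NC) (V:=MC) pr_p Ip sHG pH) //=.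
  - rewrite (fix_le_coef loc (to:=to2) (to':=to1) (U:=MC) (V:=NC) pr_p Ip sHG pH) //.
    + by move=> g Hg; apply: EMa; apply: (subsetP sHG).
    + by move=> g Hg; apply: ENb; apply: (subsetP sHG).
  - by move=> g Hg; apply: ENb; apply: (subsetP sHG).
  - by move=> g Hg; apply: EMa; apply: (subsetP sHG).
have [f' [_ f'inj f'eq]] := marks (subxx G) (k := #|[set: 'I_(size Y)]|) (leqnn _)
   (actsT to1) (actsT to2) Efix.
have f'i : injective f' by move=> x y; apply: f'inj; rewrite inE.
have [f'' f'K f''K] := injF_bij f'i.
have Yu := Yuniq bfY.
pose f (y : A) := if (insub (index y Y) : option 'I_(size Y)) is Some i then Y`_(f' i) else y.
have fE : forall i : 'I_(size Y), f Y`_i = Y`_(f' i).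
  by move=> i; rewrite /f index_uniq // valK.
have yP : forall y, y \in Y -> exists i : 'I_(size Y), y = Y`_i.
  move=> y Yy; have iY : (index y Y < size Y)%N by rewrite index_mem.
  by exists (Ordinal iY); rewrite /= nth_index.
exists f; split.
- by move=> _ /yP[i ->]; rewrite fE mem_nth.
- move=> _ _ /yP[i ->] /yP[j ->]; rewrite !fE => e.
  by rewrite (f'i _ _ (yy_inj bfY e)).
- move=> _ /yP[k ->]; exists Y`_(f'' k); first exact: mem_nth.
  by rewrite fE f''K.
- move=> q Pq s Ss _ /yP[i ->].
  have Gg : ((q^-1)%g, s) \in G by rewrite inE groupV Pq.
  have e2 : Y`_(to2 i ((q^-1)%g, s)) = sigma (phi q) * Y`_i * sigma s.
    have := actfE bfY i phS Gg; rewrite /= morphV // invgK => e; exact: e.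
  have e1 : Y`_(to1 (f' i) ((q^-1)%g, s)) = sigma q * Y`_(f' i) * sigma s.
    have := actfE bfY (f' i) idS Gg; rewrite /= invgK => e; exact: e.
  by rewrite -e2 !fE (f'eq i (in_setT i) _ Gg) e1.
Qed.
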